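(* Suppose choices follow the Luce choice model with true parameter $\theta^\star\in\Theta_b$ and all (fixed) comparison sets have cardinality $k\ge2$. Let $\widehat\theta_{k-1}\in\arg\max_{\theta\in\Theta_b}\ell_{k-1}(\theta)$. If $\lambda_2(L_M)\ge128(k-1)^2e^{2b}\,n\log(n)/m$, then with probability at least $1-3/n$, $$\mathrm{MSE}(\widehat\theta_{k-1},\theta^\star)\le D^2\frac{n(\log n+2)}{\lambda_2(L_M)^2}\frac1m,\qquad D=16\sqrt2\sqrt{k(k-1)^3}\,e^{2b}.$$
   Context: Items $N=\{1,\dots,n\}$; observations $(S_t,y_t)$, $t=1,\dots,m$. Luce choice model: choices conditionally independent with $\Pr[y_t=i\mid S_t]=e^{\theta^\star_i}/\sum_{v\in S_t}e^{\theta^\star_v}$. Pairwise probabilities $p_{i,j}(\theta)=e^{\theta_i}/(e^{\theta_i}+e^{\theta_j})$. Pseudo log-likelihood $\ell_{k-1}(\theta)=\sum_{t=1}^m\sum_{v\in S_t\setminus\{y_t\}}\log p_{y_t,v}(\theta)$. $\Theta_b=\{\theta\in[-b,b]^n:\sum\theta_i=0\}$; $\mathrm{MSE}(\widehat\theta,\theta^\star)=\frac1n\|\widehat\theta-\theta^\star\|_2^2$. $M$ has zero diagonal and off-diagonal entries $\frac nm\#\{t:\{i,j\}\subseteq S_t\}$; $L_A=\mathrm{diag}(A\mathbf 1)-A$; $\lambda_2$ is the second smallest eigenvalue. *)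

(* Defs.v *)
From Stdlib Require Import Reals Lra Lia List.
Import ListNotations.
Open Scope R_scope.

(* Items are 0..n-1; observations are t = 0..m-1. A parameter vector is
   a function nat -> R of which only indices < n matter. *)

Fixpoint rsum (n : nat) (f : nat -> R) : R :=
  match n with O => 0 | S n' => rsum n' f + f n' end.

Fixpoint rprod (n : nat) (f : nat -> R) : R :=
  match n with O => 1 | S n' => rprod n' f * f n' end.

Definition lsum (l : list nat) (f : nat -> R) : R :=
  fold_right (fun v acc => f v + acc) 0 l.

Definition luce (th : nat -> R) (St : list nat) (i : nat) : R :=
  exp (th i) / lsum St (fun v => exp (th v)).

Definition pij (th : nat -> R) (i j : nat) : R :=
  exp (th i) / (exp (th i) + exp (th j)).

Fixpoint outcomes (S : nat -> list nat) (m : nat) : list (list nat) :=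
  match m with
  | O => [ [] ]
  | Datatypes.S m' =>
      flat_map (fun ys => map (fun i => ys ++ [i]) (S m')) (outcomes S m')
  end.

Definition yat (ys : list nat) (t : nat) : nat := nth t ys O.

Definition prob (S : nat -> list nat) (m : nat) (th : nat -> R)
  (ev : list nat -> bool) : R :=
  fold_right
    (fun ys acc =>
       (if ev ys then rprod m (fun t => luce th (S t) (yat ys t)) else 0) + acc)
    0 (outcomes S m).

Definition ell (S : nat -> list nat) (m : nat) (th : nat -> R) (ys : list nat) : R :=
  rsum m (fun t =>
    lsum (filter (fun v => negb (Nat.eqb v (yat ys t))) (S t))
         (fun v => ln (pij th (yat ys t) v))).

Definition in_Theta (n : nat) (b : R) (th : nat -> R) : Prop :=
  (forall i, (i < n)%nat -> -b <= th i <= b) /\ rsum n th = 0.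

Definition MSE (n : nat) (th1 th2 : nat -> R) : R :=
  / INR n * rsum n (fun i => (th1 i - th2 i) ^ 2).

Definition Mmat (n m : nat) (S : nat -> list nat) (i j : nat) : R :=
  if Nat.eqb i j then 0
  else INR n / INR m *
       rsum m (fun t => if in_dec Nat.eq_dec i (S t) then
                          if in_dec Nat.eq_dec j (S t) then 1 else 0
                        else 0).

Definition Lap (n : nat) (A : nat -> nat -> R) (i j : nat) : R :=
  if Nat.eqb i j then rsum n (fun l => A i l) - A i j else - A i j.

(* Then mu 0 <= mu 1 <= ... are the eigenvalues of L in increasing order,
   and lambda_2(L) = mu 1. *)
Definition sorted_eigendecomp (n : nat) (L : nat -> nat -> R)
  (mu : nat -> R) (V : nat -> nat -> R) : Prop :=
  (forall a c, (a < n)%nat -> (c < n)%nat ->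
     rsum n (fun i => V a i * V c i) = if Nat.eqb a c then 1 else 0) /\
  (forall a i, (a < n)%nat -> (i < n)%nat ->
     rsum n (fun j => L i j * V a j) = mu a * V a i) /\
  (forall a c, (a <= c)%nat -> (c < n)%nat -> mu a <= mu c).

Definition Rleb (x y : R) : bool := if Rle_dec x y then true else false.

(* Main.v *)
Require Import Defs.
From Stdlib Require Import Reals Lra Lia List.
From Coquelicot Require Import Coquelicot.
From mathcomp Require all_boot all_algebra Rstruct.
Import ListNotations.
Open Scope R_scope.


Module MC.
Import all_boot all_algebra Rstruct.
Import GRing.Theory.
Local Open Scope ring_scope.

Lemma rsum_big (n : nat) (f : nat -> R) : rsum n f = \sum_(i < n) f i.
Proof.
elim: n => [|n IH] /=; first by rewrite big_ord0.
by rewrite big_ord_recr /= IH.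
Qed.

Lemma eqb_ord n (a c : 'I_n) : (if Nat.eqb a c then 1 else 0) = (a == c)%:R :> R.
Proof.
case: (eqVneq a c) => [->|ne]; first by rewrite Nat.eqb_refl.
have : Nat.eqb a c = false.
  apply/PeanoNat.Nat.eqb_neq => E; move: ne; rewrite (val_inj E) eqxx //.
by move=> ->.
Qed.

Lemma complete (n : nat) (V : nat -> nat -> R) :
  (forall a c, Peano.lt a n -> Peano.lt c n ->
     rsum n (fun i => Rdefinitions.Rmult (V a i) (V c i)) = if Nat.eqb a c then Rdefinitions.IZR 1 else Rdefinitions.IZR 0) ->
  forall i j, Peano.lt i n -> Peano.lt j n ->
     rsum n (fun a => Rdefinitions.Rmult (V a i) (V a j)) = if Nat.eqb i j then Rdefinitions.IZR 1 else Rdefinitions.IZR 0.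
Proof.
move=> H i j /ltP Hi /ltP Hj.
pose W : 'M[R]_n := \matrix_(a < n, i < n) V a i.
have HW : W *m W^T = 1%:M.
  apply/matrixP => a c; rewrite /W !mxE.
  have := H a c (ltP (ltn_ord a)) (ltP (ltn_ord c)); rewrite rsum_big eqb_ord => <-.
  by apply: eq_bigr => l _; rewrite !mxE.
have HW2 := mulmx1C HW.
have := congr1 (fun M : 'M[R]_n => M (Ordinal Hi) (Ordinal Hj)) HW2.
rewrite /= !mxE rsum_big -(@eqb_ord n (Ordinal Hi) (Ordinal Hj)) /= => <-.
by apply: eq_bigr => l _; rewrite !mxE.
Qed.
End MC.


Lemma rsum_ext n f g : (forall i, (i < n)%nat -> f i = g i) -> rsum n f = rsum n g.
Proof. induction n; simpl; intros H; auto. rewrite IHn, H; auto. Qed.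

Lemma rsum_plus n f g : rsum n (fun i => f i + g i) = rsum n f + rsum n g.
Proof. induction n; simpl. ring. rewrite IHn. ring. Qed.

Lemma rsum_minus n f g : rsum n (fun i => f i - g i) = rsum n f - rsum n g.
Proof. induction n; simpl. ring. rewrite IHn. ring. Qed.

Lemma rsum_scal n c f : rsum n (fun i => c * f i) = c * rsum n f.
Proof. induction n; simpl. ring. rewrite IHn. ring. Qed.

Lemma rsum_zero n : rsum n (fun _ => 0) = 0.
Proof. induction n; simpl; auto. rewrite IHn. ring. Qed.

Lemma rsum_le n f g : (forall i, (i < n)%nat -> f i <= g i) -> rsum n f <= rsum n g.
Proof. induction n; simpl; intros H. lra. apply Rplus_le_compat; auto. Qed.

Lemma rsum_nonneg n f : (forall i, (i < n)%nat -> 0 <= f i) -> 0 <= rsum n f.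
Proof. intros H. rewrite <- (rsum_zero n). apply rsum_le; auto. Qed.

Lemma rsum_swap n m f : rsum n (fun i => rsum m (fun j => f i j)) = rsum m (fun j => rsum n (fun i => f i j)).
Proof.
  induction n; simpl. rewrite rsum_zero; auto.
  rewrite IHn. rewrite <- rsum_plus. auto.
Qed.

Lemma rsum_delta n i f : (i < n)%nat -> rsum n (fun j => if Nat.eqb j i then f j else 0) = f i.
Proof.
  induction n; simpl; intros H. lia.
  destruct (Nat.eq_dec i n).
  - subst. rewrite Nat.eqb_refl.
    rewrite (rsum_ext n _ (fun _ => 0)). rewrite rsum_zero. ring.
    intros j Hj. destruct (Nat.eqb_spec j n); auto; lia.
  - rewrite IHn by lia. destruct (Nat.eqb_spec n i). lia. ring.
Qed.

Lemma rsum_delta' n i f : (i < n)%nat -> rsum n (fun j => f j * (if Nat.eqb i j then 1 else 0)) = f i.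
Proof.
  intros H. rewrite <- (rsum_delta n i f H). apply rsum_ext. intros j _.
  destruct (Nat.eqb_spec i j), (Nat.eqb_spec j i); subst; try lia; ring.
Qed.

Lemma rsum_shift n f : rsum (S n) f = f O + rsum n (fun a => f (S a)).
Proof. induction n; simpl. ring. simpl in IHn. rewrite IHn. ring. Qed.

Lemma lsum_cons a l f : lsum (a :: l) f = f a + lsum l f.
Proof. reflexivity. Qed.

Lemma lsum_nil f : lsum [] f = 0.
Proof. reflexivity. Qed.

Lemma lsum_ext l f g : (forall i, In i l -> f i = g i) -> lsum l f = lsum l g.
Proof. induction l; intros H; auto. rewrite !lsum_cons. rewrite H, IHl; simpl; auto. intros; apply H; simpl; auto. Qed.

Lemma lsum_plus l f g : lsum l (fun i => f i + g i) = lsum l f + lsum l g.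
Proof. induction l. rewrite !lsum_nil; ring. rewrite !lsum_cons, IHl. ring. Qed.

Lemma lsum_minus l f g : lsum l (fun i => f i - g i) = lsum l f - lsum l g.
Proof. induction l. rewrite !lsum_nil; ring. rewrite !lsum_cons, IHl. ring. Qed.

Lemma lsum_scal l c f : lsum l (fun i => c * f i) = c * lsum l f.
Proof. induction l. rewrite !lsum_nil; ring. rewrite !lsum_cons, IHl. ring. Qed.

Lemma lsum_const l c : lsum l (fun _ => c) = INR (length l) * c.
Proof. induction l. rewrite lsum_nil; simpl; ring. rewrite lsum_cons, IHl. simpl length. rewrite S_INR. ring. Qed.

Lemma lsum_le l f g : (forall i, In i l -> f i <= g i) -> lsum l f <= lsum l g.
Proof. induction l; intros H. rewrite !lsum_nil; lra. rewrite !lsum_cons. apply Rplus_le_compat; simpl in *; auto. Qed.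

Lemma lsum_nonneg l f : (forall i, In i l -> 0 <= f i) -> 0 <= lsum l f.
Proof. intros H. replace 0 with (lsum l (fun _ => 0)). apply lsum_le; auto.
  rewrite lsum_const. ring. Qed.

Lemma lsum_swap l1 l2 f : lsum l1 (fun i => lsum l2 (fun j => f i j)) = lsum l2 (fun j => lsum l1 (fun i => f i j)).
Proof.
  induction l1. rewrite lsum_nil. rewrite (lsum_ext l2 _ (fun _ => 0)). rewrite lsum_const; ring. intros; auto.
  rewrite lsum_cons, IHl1. rewrite <- lsum_plus. apply lsum_ext. intros. reflexivity.
Qed.

Lemma lsum_rsum l n f : lsum l (fun v => rsum n (fun i => f v i)) = rsum n (fun i => lsum l (fun v => f v i)).
Proof.
  induction l. rewrite lsum_nil. rewrite (rsum_ext n _ (fun _ => 0)). rewrite rsum_zero; auto. intros; auto.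
  rewrite lsum_cons, IHl. rewrite <- rsum_plus. apply rsum_ext. intros. reflexivity.
Qed.

Lemma lsum_filter0 l y f : f y = 0 -> lsum (filter (fun v => negb (Nat.eqb v y)) l) f = lsum l f.
Proof.
  intros H. induction l. auto. simpl filter. destruct (Nat.eqb_spec a y).
  - subst. cbn -[lsum]. rewrite IHl, lsum_cons, H. ring.
  - cbn -[lsum]. rewrite !lsum_cons, IHl. auto.
Qed.

Lemma lsum_indicator l n f : NoDup l -> (forall i, In i l -> (i < n)%nat) ->
  lsum l f = rsum n (fun i => if in_dec Nat.eq_dec i l then f i else 0).
Proof.
  induction l; intros Hnd Hin.
  - rewrite lsum_nil. rewrite (rsum_ext n _ (fun _ => 0)). rewrite rsum_zero; auto. intros; auto.
  - inversion Hnd; subst. rewrite lsum_cons, IHl; auto.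
    2: { intros; apply Hin; simpl; auto. }
    rewrite <- (rsum_delta n a f) at 1 by (apply Hin; simpl; auto).
    rewrite <- rsum_plus. apply rsum_ext. intros i _.
    destruct (in_dec Nat.eq_dec i (a :: l)) as [Hi|Hi]; destruct (in_dec Nat.eq_dec i l) as [Hi2|Hi2];
      destruct (Nat.eqb_spec i a); subst; try tauto; try ring.
    + destruct Hi; subst; tauto.
    + exfalso. apply Hi. simpl; auto.
    + exfalso. apply Hi. simpl; auto.
Qed.

Lemma lsum_delta_in l j f : NoDup l -> In j l -> lsum l (fun u => f u * (if Nat.eqb j u then 1 else 0)) = f j.
Proof.
  induction l; intros Hnd Hj. destruct Hj.
  inversion Hnd; subst. rewrite lsum_cons. destruct Hj as [Ha|Hj].
  - subst a. rewrite Nat.eqb_refl. rewrite (lsum_ext l _ (fun _ => 0)). rewrite lsum_const; ring.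
    intros i Hi. destruct (Nat.eqb_spec j i); subst; try tauto; ring.
  - rewrite IHl; auto. destruct (Nat.eqb_spec j a); subst; try tauto; ring.
Qed.

Lemma lsum_delta_notin l j f : ~ In j l -> lsum l (fun u => f u * (if Nat.eqb j u then 1 else 0)) = 0.
Proof.
  intros Hj. rewrite (lsum_ext l _ (fun _ => 0)). rewrite lsum_const; ring.
  intros i Hi. destruct (Nat.eqb_spec j i); subst; try tauto; ring.
Qed.

Lemma filter_notin l y : ~ In y l -> filter (fun v => negb (Nat.eqb v y)) l = l.
Proof.
  induction l; intros H; auto. simpl. destruct (Nat.eqb_spec a y).
  - subst. exfalso. apply H. simpl; auto.
  - simpl. rewrite IHl; auto. intros Hc; apply H; simpl; auto.
Qed.

Lemma filter_length_nodup l y : NoDup l -> In y l -> length (filter (fun v => negb (Nat.eqb v y)) l) = (length l - 1)%nat.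
Proof.
  induction l; intros Hnd Hy. destruct Hy.
  inversion Hnd; subst. simpl. destruct (Nat.eqb_spec a y).
  - subst. simpl. rewrite filter_notin; auto. lia.
  - destruct Hy as [Hy|Hy]. congruence. simpl. rewrite IHl; auto. destruct l. destruct Hy. simpl. lia.
Qed.


Definition sig (x : R) : R := / (1 + exp (- x)).

Lemma sig_pos x : 0 < sig x.
Proof. unfold sig. apply Rinv_0_lt_compat. pose proof (exp_pos (-x)). lra. Qed.

Lemma sig_lt1 x : sig x < 1.
Proof.
  unfold sig. pose proof (exp_pos (-x)).
  rewrite <- Rinv_1. apply Rinv_lt_contravar; lra.
Qed.

Lemma sig_deriv x : derivable_pt_lim sig x (sig x * (1 - sig x)).
Proof.
  apply is_derive_Reals. unfold sig.
  auto_derive.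
  - pose proof (exp_pos (-x)). lra.
  - pose proof (exp_pos (-x)). field. lra.
Qed.

Lemma lsig_deriv x : derivable_pt_lim (fun x => ln (sig x)) x (1 - sig x).
Proof.
  apply is_derive_Reals. unfold sig.
  auto_derive.
  - pose proof (exp_pos (-x)). repeat split; try lra. apply Rinv_0_lt_compat. lra.
  - pose proof (exp_pos (-x)). field. lra.
Qed.

Lemma exp_le x y : x <= y -> exp x <= exp y.
Proof. intros H. destruct (Rle_lt_or_eq_dec _ _ H) as [h|h]. left; apply exp_increasing; auto. rewrite h; lra. Qed.

Lemma sig_var x : sig x * (1 - sig x) = exp (- x) / (1 + exp (- x)) ^ 2.
Proof. unfold sig. pose proof (exp_pos (-x)). field. lra. Qed.

Lemma sigvar_lb b x : -(2*b) <= x <= 2*b -> exp (-(2*b)) / 4 <= sig x * (1 - sig x).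
Proof.
  intros Hx. rewrite sig_var.
  assert (He : 0 < exp (-x)) by apply exp_pos.
  assert (Hlo : exp (-(2*b)) <= exp (-x)) by (apply exp_le; lra).
  assert (Hhi : exp (-x) <= exp (2*b)) by (apply exp_le; lra).
  assert (HL : exp (-(2*b)) * exp (2*b) = 1) by (rewrite <- exp_plus; replace (-(2*b) + 2*b) with 0 by ring; apply exp_0).
  set (e := exp (-x)) in *. set (L := exp (-(2*b))) in *. set (U := exp (2*b)) in *.
  assert (HLp : 0 < L) by apply exp_pos.
  apply (Rmult_le_reg_r ((1+e)^2)). nra.
  replace (e / (1 + e) ^ 2 * (1 + e) ^ 2) with e by (field; nra).
  destruct (Rle_dec e 1).
  - assert (L * (1+e)^2 <= 4 * L) by nra. nra.
  - assert (L * e <= 1) by nra. nra.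
Qed.

Lemma sig_diff_lb b x0 x1 : -(2*b) <= x0 -> x0 <= x1 -> x1 <= 2*b ->
  exp (-(2*b)) / 4 * (x1 - x0) <= sig x1 - sig x0.
Proof.
  intros H0 H01 H1. destruct (Rle_lt_or_eq_dec _ _ H01) as [Hlt|Heq].
  - destruct (MVT_cor2 sig (fun x => sig x * (1 - sig x)) x0 x1 Hlt
       (fun c _ => sig_deriv c)) as [c [Hc Hc2]].
    rewrite Hc. apply Rmult_le_compat_r. lra. apply sigvar_lb. lra.
  - subst. lra.
Qed.

Lemma lsig_ineq b d0 d1 : -(2*b) <= d0 <= 2*b -> -(2*b) <= d1 <= 2*b ->
  ln (sig d1) - ln (sig d0) <= (1 - sig d0) * (d1 - d0) - exp (-(2*b)) / 8 * (d1 - d0) ^ 2.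
Proof.
  intros H0 H1. set (c := exp (-(2*b)) / 4).
  set (h := fun x => ln (sig d0) + (1 - sig d0) * (x - d0) - c / 2 * (x - d0) ^ 2 - ln (sig x)).
  assert (Hd : forall x, derivable_pt_lim h x ((1 - sig d0) - c * (x - d0) - (1 - sig x))).
  { intros x. unfold h.
    replace ((1 - sig d0) - c * (x - d0) - (1 - sig x)) with
      (0 + ((1 - sig d0) * (1 - 0)) - c/2 * (INR 2 * (x - d0) ^ (pred 2) * (1 - 0)) - (1 - sig x))
      by (cbn [INR pred pow]; field).
    apply derivable_pt_lim_minus; [|apply lsig_deriv].
    apply derivable_pt_lim_minus.
    apply derivable_pt_lim_plus. apply derivable_pt_lim_const.
    apply derivable_pt_lim_scal. apply derivable_pt_lim_minus. apply derivable_pt_lim_id. apply derivable_pt_lim_const.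
    apply derivable_pt_lim_scal.
    apply (derivable_pt_lim_comp (fun x => x - d0) (fun y => y ^ 2)).
    apply derivable_pt_lim_minus. apply derivable_pt_lim_id. apply derivable_pt_lim_const.
    apply derivable_pt_lim_pow. }
  assert (Hh0 : h d0 = 0) by (unfold h; ring).
  assert (Hgoal : 0 <= h d1).
  { destruct (Rtotal_order d0 d1) as [Hlt|[Heq|Hgt]].
    - destruct (MVT_cor2 h _ d0 d1 Hlt (fun c _ => Hd c)) as [xi [Hxi Hxi2]].
      assert (0 <= (1 - sig d0) - c * (xi - d0) - (1 - sig xi)).
      { pose proof (sig_diff_lb b d0 xi ltac:(lra) ltac:(lra) ltac:(lra)). unfold c. lra. }
      assert (0 <= h d1 - h d0). rewrite Hxi. apply Rmult_le_pos; lra. lra.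
    - subst. lra.
    - destruct (MVT_cor2 h _ d1 d0 Hgt (fun c _ => Hd c)) as [xi [Hxi Hxi2]].
      assert ((1 - sig d0) - c * (xi - d0) - (1 - sig xi) <= 0).
      { pose proof (sig_diff_lb b xi d0 ltac:(lra) ltac:(lra) ltac:(lra)). unfold c. lra. }
      assert (h d0 - h d1 <= 0). rewrite Hxi. apply Rmult_le_0_r; lra. lra. }
  unfold h in Hgoal. unfold c in Hgoal. lra.
Qed.


Lemma exp_le' x y : x <= y -> exp x <= exp y.
Proof. intros H. destruct (Rle_lt_or_eq_dec _ _ H) as [h|h]. left; apply exp_increasing; auto. rewrite h; lra. Qed.

Lemma hoef_phi (p s : R) : 0 <= p <= 1 -> 0 <= s ->
  - p * s + ln (1 - p + p * exp s) <= s ^ 2 / 8.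
Proof.
  intros Hp Hs.
  assert (Hpos : forall x, 0 < 1 - p + p * exp x).
  { intros x. pose proof (exp_pos x). destruct (Rle_lt_or_eq_dec _ _ (proj1 Hp)).
    - assert (1 - p + p * exp x >= p * exp x) by lra. nra.
    - subst. lra. }
  set (d1 := fun x => - p + p * exp x / (1 - p + p * exp x)).
  set (d2 := fun x => p * exp x * (1 - p) / (1 - p + p * exp x) ^ 2).
  set (phi := fun x => - p * x + ln (1 - p + p * exp x)).
  assert (Hd1 : forall x, derivable_pt_lim phi x (d1 x)).
  { intros x. apply is_derive_Reals. unfold phi, d1. pose proof (Hpos x). auto_derive. lra. field. lra. }
  assert (Hd2 : forall x, derivable_pt_lim d1 x (d2 x)).
  { intros x. apply is_derive_Reals. unfold d1, d2. pose proof (Hpos x). auto_derive. lra. field. lra. }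
  assert (Hb2 : forall x, d2 x <= 1 / 4).
  { intros x. unfold d2. pose proof (Hpos x). pose proof (exp_pos x).
    set (u := p * exp x) in *. set (w := 1 - p) in *.
    assert (0 <= u) by (unfold u; nra). assert (0 <= w) by (unfold w; lra).
    apply (Rmult_le_reg_r ((w + u) ^ 2)). nra.
    replace (u * w / (w + u) ^ 2 * (w + u) ^ 2) with (u * w) by (field; lra).
    assert (0 <= (u - w) ^ 2) by apply pow2_ge_0. nra. }
  (* h' = x/4 - d1 x >= 0 for x >= 0 *)
  assert (Hd1b : forall x, 0 <= x -> d1 x <= x / 4).
  { intros x Hx. destruct (Rle_lt_or_eq_dec _ _ Hx) as [Hlt|Heq].
    - destruct (MVT_cor2 d1 d2 0 x Hlt (fun c _ => Hd2 c)) as [xi [Hxi _]].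
      assert (d1 0 = 0) by (unfold d1; rewrite exp_0; field; lra).
      pose proof (Hb2 xi). nra.
    - subst. unfold d1. rewrite exp_0. replace (- p + p * 1 / (1 - p + p * 1)) with 0 by (field; lra). lra. }
  set (h := fun x => x ^ 2 / 8 - phi x).
  assert (Hh : forall x, derivable_pt_lim h x (x / 4 - d1 x)).
  { intros x. unfold h. replace (x / 4 - d1 x) with (INR 2 * x ^ 1 * 1 / 8 - d1 x) by (simpl; field).
    apply derivable_pt_lim_minus; auto.
    unfold Rdiv. apply derivable_pt_lim_scal_right.
    replace (INR 2 * x ^ 1 * 1) with (INR 2 * x ^ pred 2) by (simpl; ring).
    apply derivable_pt_lim_pow. }
  assert (0 <= h s).
  { destruct (Rle_lt_or_eq_dec _ _ Hs) as [Hlt|Heq].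
    - destruct (MVT_cor2 h _ 0 s Hlt (fun c _ => Hh c)) as [xi [Hxi Hxi2]].
      assert (h 0 = 0) by (unfold h, phi; rewrite exp_0; replace (1 - p + p * 1) with 1 by ring; rewrite ln_1; field).
      pose proof (Hd1b xi ltac:(lra)). nra.
    - subst. unfold h, phi. rewrite exp_0. replace (1 - p + p * 1) with 1 by ring. rewrite ln_1. lra. }
  unfold h, phi in H. lra.
Qed.

Lemma hoef_two (lo hi : R) : lo <= 0 -> 0 <= hi -> lo < hi ->
  (hi * exp lo - lo * exp hi) / (hi - lo) <= exp ((hi - lo) ^ 2 / 8).
Proof.
  intros Hlo Hhi Hlt. set (r := hi - lo). set (p := - lo / r).
  assert (Hr : 0 < r) by (unfold r; lra).
  assert (Hp : 0 <= p <= 1).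
  { unfold p. split. apply Rmult_le_pos. lra. left; apply Rinv_0_lt_compat; lra.
    apply (Rmult_le_reg_r r); auto. unfold Rdiv. rewrite Rmult_assoc, Rinv_l by lra. unfold r; lra. }
  assert (Elo : lo = - p * r) by (unfold p; field; lra).
  assert (Ehi : hi = (1 - p) * r) by (unfold p, r; field; lra).
  pose proof (hoef_phi p r Hp (Rlt_le _ _ Hr)) as H.
  assert (Hq : 0 < 1 - p + p * exp r).
  { pose proof (exp_pos r). destruct (Rle_lt_or_eq_dec _ _ (proj1 Hp)).
    - assert (1 - p + p * exp r >= p * exp r) by lra. nra.
    - rewrite <- e. lra. }
  assert (E : (hi * exp lo - lo * exp hi) / r = exp (- p * r) * (1 - p + p * exp r)).
  { rewrite Ehi, Elo. clearbody r p.
    replace ((1 - p) * r) with (r + - p * r) by ring. rewrite exp_plus. field. lra. }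
  rewrite E. rewrite <- (exp_ln (1 - p + p * exp r)) by auto. rewrite <- exp_plus.
  apply exp_le'. lra.
Qed.


Definition lsumL (L : list (list nat)) (F : list nat -> R) : R :=
  fold_right (fun ys acc => F ys + acc) 0 L.

Definition Wt (S : nat -> list nat) (th : nat -> R) (j : nat) (ys : list nat) : R :=
  rprod j (fun t => luce th (S t) (yat ys t)).

Lemma lsumL_ext L F G : (forall ys, In ys L -> F ys = G ys) -> lsumL L F = lsumL L G.
Proof. induction L; simpl; intros H; auto. rewrite H, IHL; auto. Qed.

Lemma lsumL_le L F G : (forall ys, In ys L -> F ys <= G ys) -> lsumL L F <= lsumL L G.
Proof. induction L; simpl; intros H. lra. apply Rplus_le_compat; auto. Qed.

Lemma lsumL_minus L F G : lsumL L (fun ys => F ys - G ys) = lsumL L F - lsumL L G.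
Proof. induction L; simpl. ring. rewrite IHL. ring. Qed.

Lemma lsumL_scal L c F : lsumL L (fun ys => c * F ys) = c * lsumL L F.
Proof. induction L; simpl. ring. rewrite IHL. ring. Qed.

Lemma lsumL_app L1 L2 F : lsumL (L1 ++ L2) F = lsumL L1 F + lsumL L2 F.
Proof. induction L1; simpl. ring. rewrite IHL1. ring. Qed.

Lemma lsumL_map l g F : lsumL (map g l) F = lsum l (fun i => F (g i)).
Proof. induction l; simpl; auto. rewrite IHl. reflexivity. Qed.

Lemma outcomes_S S j F : lsumL (outcomes S (Datatypes.S j)) F =
  lsumL (outcomes S j) (fun ys => lsum (S j) (fun i => F (ys ++ [i]))).
Proof.
  simpl. induction (outcomes S j); simpl; auto.
  rewrite lsumL_app, IHl, lsumL_map. auto.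
Qed.

Lemma outcomes_prop S j ys : In ys (outcomes S j) ->
  length ys = j /\ (forall t, (t < j)%nat -> In (yat ys t) (S t)).
Proof.
  revert ys. induction j; intros ys H.
  - simpl in H. destruct H as [<-|[]]. split; auto. intros; lia.
  - simpl in H. apply in_flat_map in H. destruct H as [zs [Hz Hy]].
    apply in_map_iff in Hy. destruct Hy as [i [<- Hi]].
    destruct (IHj zs Hz) as [Hl Ht]. split.
    + rewrite length_app. simpl. lia.
    + intros t Htj. unfold yat. cbv beta. destruct (Nat.eq_dec t j).
      * subst t. rewrite <- Hl. rewrite (nth_middle zs [] i 0%nat). rewrite Hl. exact Hi.
      * rewrite app_nth1 by lia. apply Ht. lia.
Qed.

Lemma yat_app_lt ys i t : (t < length ys)%nat -> yat (ys ++ [i]) t = yat ys t.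
Proof. intros H. unfold yat. apply app_nth1; auto. Qed.

Lemma yat_app_eq ys i : yat (ys ++ [i]) (length ys) = i.
Proof. unfold yat. apply nth_middle. Qed.

Lemma rprod_ext n f g : (forall i, (i < n)%nat -> f i = g i) -> rprod n f = rprod n g.
Proof. induction n; simpl; intros H; auto. rewrite IHn, H; auto. Qed.

Lemma Wt_step S th j ys i : length ys = j ->
  Wt S th (Datatypes.S j) (ys ++ [i]) = Wt S th j ys * luce th (S j) i.
Proof.
  intros Hl. unfold Wt. simpl. f_equal.
  - apply rprod_ext. intros t Ht. rewrite yat_app_lt; auto. lia.
  - subst. rewrite yat_app_eq. auto.
Qed.

Lemma lsum_exp_pos th l : l <> [] -> 0 < lsum l (fun v => exp (th v)).
Proof.
  destruct l. congruence. intros _. rewrite lsum_cons.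
  pose proof (exp_pos (th n)). assert (0 <= lsum l (fun v => exp (th v))).
  apply lsum_nonneg. intros; left; apply exp_pos. lra.
Qed.

Lemma luce_nonneg th l i : 0 <= luce th l i.
Proof.
  unfold luce. destruct l. rewrite lsum_nil. unfold Rdiv. rewrite Rinv_0. lra.
  left. apply Rdiv_lt_0_compat. apply exp_pos. apply lsum_exp_pos. congruence.
Qed.

Lemma luce_sum th l : l <> [] -> lsum l (luce th l) = 1.
Proof.
  intros H. unfold luce. pose proof (lsum_exp_pos th l H).
  rewrite (lsum_ext l _ (fun i => / lsum l (fun v => exp (th v)) * exp (th i))) by (intros; unfold Rdiv; ring).
  rewrite lsum_scal. field. lra.
Qed.

Lemma Wt_nonneg S th j ys : 0 <= Wt S th j ys.
Proof. unfold Wt. induction j; simpl. lra. apply Rmult_le_pos; auto. apply luce_nonneg. Qed.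

Lemma Wt_total S th m j : (j <= m)%nat -> (forall t, (t < m)%nat -> S t <> []) ->
  lsumL (outcomes S j) (Wt S th j) = 1.
Proof.
  intros Hj HS. induction j.
  - simpl. unfold Wt. simpl. ring.
  - rewrite outcomes_S. rewrite <- IHj by lia. apply lsumL_ext. intros ys Hys.
    destruct (outcomes_prop S j ys Hys) as [Hl _].
    rewrite (lsum_ext _ _ (fun i => Wt S th j ys * luce th (S j) i)) by (intros; apply Wt_step; auto).
    rewrite lsum_scal, luce_sum. ring. apply HS. lia.
Qed.

Lemma exp_chord lo hi z : lo < hi -> lo <= z <= hi ->
  exp z <= ((hi - z) * exp lo + (z - lo) * exp hi) / (hi - lo).
Proof.
  intros Hlh Hz. pose proof (exp_ineq1_le (lo - z)). pose proof (exp_ineq1_le (hi - z)).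
  assert (E1 : exp lo = exp z * exp (lo - z)) by (rewrite <- exp_plus; f_equal; ring).
  assert (E2 : exp hi = exp z * exp (hi - z)) by (rewrite <- exp_plus; f_equal; ring).
  pose proof (exp_pos z).
  apply (Rmult_le_reg_r (hi - lo)). lra.
  replace (((hi - z) * exp lo + (z - lo) * exp hi) / (hi - lo) * (hi - lo)) with ((hi - z) * exp lo + (z - lo) * exp hi) by (field; lra).
  rewrite E1, E2.
  assert ((hi - z) * (exp z * (1 + (lo - z))) <= (hi - z) * (exp z * exp (lo - z))).
  { apply Rmult_le_compat_l. lra. apply Rmult_le_compat_l; lra. }
  assert ((z - lo) * (exp z * (1 + (hi - z))) <= (z - lo) * (exp z * exp (hi - z))).
  { apply Rmult_le_compat_l. lra. apply Rmult_le_compat_l; lra. }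
  nra.
Qed.

Lemma hoeffding_list l (p z : nat -> R) lo hi : lo <= 0 -> 0 <= hi ->
  (forall y, In y l -> 0 <= p y) -> lsum l p = 1 -> lsum l (fun y => p y * z y) = 0 ->
  (forall y, In y l -> lo <= z y <= hi) ->
  lsum l (fun y => p y * exp (z y)) <= exp ((hi - lo) ^ 2 / 8).
Proof.
  intros Hlo Hhi Hp Hs Hm Hz. destruct (Rle_lt_or_eq_dec _ _ (Rle_trans _ _ _ Hlo Hhi)) as [Hlt|Heq].
  - apply Rle_trans with (lsum l (fun y => p y * (((hi - z y) * exp lo + (z y - lo) * exp hi) / (hi - lo)))).
    { apply lsum_le. intros y Hy. apply Rmult_le_compat_l; auto. apply exp_chord; auto. }
    rewrite (lsum_ext l _ (fun y => (/ (hi - lo) * (hi * exp lo - lo * exp hi)) * p y + (/ (hi - lo) * (exp hi - exp lo)) * (p y * z y))).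
    2: { intros. field. lra. }
    rewrite lsum_plus, !lsum_scal, Hs, Hm.
    replace (/ (hi - lo) * (hi * exp lo - lo * exp hi) * 1 + / (hi - lo) * (exp hi - exp lo) * 0)
      with ((hi * exp lo - lo * exp hi) / (hi - lo)) by (field; lra).
    apply hoef_two; auto.
  - assert (lo = 0) by lra. assert (hi = 0) by lra. subst.
    rewrite (lsum_ext l _ p). rewrite Hs. replace ((0 - 0) ^ 2 / 8) with 0 by field. rewrite exp_0. lra.
    intros y Hy. destruct (Hz y Hy). replace (z y) with 0 by lra. rewrite exp_0. ring.
Qed.


Definition dot n (x v : nat -> R) := rsum n (fun i => x i * v i).
Definition nrm n (x : nat -> R) := rsum n (fun i => x i ^ 2).

Lemma nrm_nonneg n x : 0 <= nrm n x.
Proof. apply rsum_nonneg. intros; apply pow2_ge_0. Qed.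

Lemma rsum_prod n a b : rsum n a * rsum n b = rsum n (fun i => rsum n (fun j => a i * b j)).
Proof.
  rewrite Rmult_comm, <- rsum_scal. apply rsum_ext. intros i _.
  rewrite Rmult_comm, <- rsum_scal. apply rsum_ext. intros; ring.
Qed.

Lemma cauchy_schwarz n x v : dot n x v ^ 2 <= nrm n x * nrm n v.
Proof.
  set (P := rsum n (fun i => rsum n (fun j => x i ^ 2 * v j ^ 2))).
  set (D := rsum n (fun i => rsum n (fun j => x i * v i * (x j * v j)))).
  assert (E1 : nrm n x * nrm n v = P) by (unfold nrm, P; apply rsum_prod).
  assert (E2 : dot n x v ^ 2 = D) by (unfold dot, D; rewrite <- rsum_prod; ring).
  assert (E3 : rsum n (fun i => rsum n (fun j => (x i * v j - x j * v i) ^ 2)) = 2 * P - 2 * D).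
  { rewrite (rsum_ext n (fun i => rsum n (fun j => (x i * v j - x j * v i) ^ 2))
       (fun i => rsum n (fun j => x i ^ 2 * v j ^ 2) + rsum n (fun j => x j ^ 2 * v i ^ 2) - 2 * rsum n (fun j => x i * v i * (x j * v j)))).
    2: { intros i _. rewrite <- rsum_scal, <- rsum_plus, <- rsum_minus. apply rsum_ext; intros; ring. }
    rewrite rsum_minus, rsum_plus, rsum_scal.
    rewrite (rsum_swap n n (fun i j => x j ^ 2 * v i ^ 2)). fold P D. ring. }
  assert (0 <= rsum n (fun i => rsum n (fun j => (x i * v j - x j * v i) ^ 2))).
  { apply rsum_nonneg; intros; apply rsum_nonneg; intros; apply pow2_ge_0. }
  lra.
Qed.

Lemma nrm_ext n f g : (forall i, (i < n)%nat -> f i = g i) -> nrm n f = nrm n g.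
Proof. intros H. unfold nrm. apply rsum_ext. intros i Hi. rewrite H; auto. Qed.

Lemma nrm_plus n x v : nrm n (fun i => x i + v i) = nrm n x + 2 * dot n x v + nrm n v.
Proof.
  unfold nrm, dot. rewrite <- rsum_scal, <- !rsum_plus. apply rsum_ext. intros; ring.
Qed.

Lemma one_step n l th (gy : nat -> nat -> R) c2 rho lam x :
  l <> [] -> 0 <= lam ->
  (lsum l (fun y => luce th l y * dot n x (gy y)) = 0) ->
  (forall y, In y l -> nrm n (gy y) <= c2) ->
  (exists lo hi, lo <= 0 <= hi /\ (hi - lo) ^ 2 <= rho * nrm n x /\
      forall y, In y l -> lo <= dot n x (gy y) <= hi) ->
  lsum l (fun y => luce th l y * exp (lam * nrm n (fun i => x i + gy y i))) <=
  exp (lam * (1 + lam * rho / 2) * nrm n x + lam * c2).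
Proof.
  intros Hl Hlam Hmean Hnorm [lo [hi [[Hlo Hhi] [Hr Hb]]]].
  apply Rle_trans with (lsum l (fun y => exp (lam * nrm n x + lam * c2) * (luce th l y * exp (2 * lam * dot n x (gy y))))).
  { apply lsum_le. intros y Hy. rewrite nrm_plus.
    rewrite (Rmult_comm (exp _)), Rmult_assoc. apply Rmult_le_compat_l. apply luce_nonneg.
    rewrite <- exp_plus. apply exp_le'. pose proof (Hnorm y Hy). nra. }
  rewrite lsum_scal.
  assert (H2 : lsum l (fun y => luce th l y * exp (2 * lam * dot n x (gy y))) <= exp ((2 * lam * hi - 2 * lam * lo) ^ 2 / 8)).
  { apply (hoeffding_list l (luce th l) (fun y => 2 * lam * dot n x (gy y))).
    - nra. - nra.
    - intros; apply luce_nonneg.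
    - apply luce_sum; auto.
    - rewrite (lsum_ext l _ (fun y => (2 * lam) * (luce th l y * dot n x (gy y)))) by (intros; ring).
      rewrite lsum_scal, Hmean. ring.
    - intros y Hy. destruct (Hb y Hy). split; nra. }
  apply Rle_trans with (exp (lam * nrm n x + lam * c2) * exp ((2 * lam * hi - 2 * lam * lo) ^ 2 / 8)).
  { apply Rmult_le_compat_l. left; apply exp_pos. auto. }
  rewrite <- exp_plus. apply exp_le'.
  replace ((2 * lam * hi - 2 * lam * lo) ^ 2 / 8) with (lam ^ 2 * (hi - lo) ^ 2 / 2) by field.
  assert (lam ^ 2 * (hi - lo) ^ 2 <= lam ^ 2 * (rho * nrm n x)).
  { apply Rmult_le_compat_l; auto. apply pow2_ge_0. }
  nra.
Qed.

Definition Gs (g : nat -> nat -> nat -> R) (ys : list nat) (j : nat) : nat -> R :=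
  fun i => rsum j (fun t => g t (yat ys t) i).

Definition Fm S th n g j lam :=
  lsumL (outcomes S j) (fun ys => Wt S th j ys * exp (lam * nrm n (Gs g ys j))).

Section MGF.
Variables (S : nat -> list nat) (th : nat -> R) (n m : nat) (g : nat -> nat -> nat -> R) (c2 rho : R).
Hypothesis HS : forall t, (t < m)%nat -> S t <> [].
Hypothesis Hmean : forall t x, (t < m)%nat -> lsum (S t) (fun y => luce th (S t) y * dot n x (g t y)) = 0.
Hypothesis Hnorm : forall t y, (t < m)%nat -> In y (S t) -> nrm n (g t y) <= c2.
Hypothesis Hrange : forall t x, (t < m)%nat -> exists lo hi, lo <= 0 <= hi /\ (hi - lo) ^ 2 <= rho * nrm n x /\
      forall y, In y (S t) -> lo <= dot n x (g t y) <= hi.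

Lemma Fm_step j lam : (j < m)%nat -> 0 <= lam ->
  Fm S th n g (Datatypes.S j) lam <= exp (lam * c2) * Fm S th n g j (lam * (1 + lam * rho / 2)).
Proof.
  intros Hj Hlam. unfold Fm. rewrite outcomes_S. rewrite <- lsumL_scal. apply lsumL_le.
  intros ys Hys. destruct (outcomes_prop S j ys Hys) as [Hl _].
  rewrite (lsum_ext _ _ (fun i => Wt S th j ys * (luce th (S j) i * exp (lam * nrm n (fun k => Gs g ys j k + g j i k))))).
  2: { intros i Hi. rewrite Wt_step by auto.
       rewrite (nrm_ext n (Gs g (ys ++ [i]) (Datatypes.S j)) (fun k => Gs g ys j k + g j i k)). ring.
       intros k _. unfold Gs. simpl. f_equal.
       - apply rsum_ext. intros t Ht. rewrite yat_app_lt; auto. lia.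
       - rewrite <- Hl. rewrite yat_app_eq. auto. }
  rewrite lsum_scal.
  pose proof (one_step n (S j) th (g j) c2 rho lam (Gs g ys j) (HS j Hj) Hlam (Hmean j _ Hj)
      (fun y Hy => Hnorm j y Hj Hy) (Hrange j _ Hj)) as H1.
  pose proof (Wt_nonneg S th j ys).
  apply Rle_trans with (Wt S th j ys * exp (lam * (1 + lam * rho / 2) * nrm n (Gs g ys j) + lam * c2)).
  { apply Rmult_le_compat_l; auto. }
  rewrite exp_plus. right. ring.
Qed.

Lemma Fm_mono j l1 l2 : l1 <= l2 -> Fm S th n g j l1 <= Fm S th n g j l2.
Proof.
  intros H. unfold Fm. apply lsumL_le. intros ys _. apply Rmult_le_compat_l. apply Wt_nonneg.
  apply exp_le'. apply Rmult_le_compat_r; auto. apply nrm_nonneg.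
Qed.

Lemma Fm_bound A0 : 0 <= c2 -> 0 <= rho -> rho / 2 * INR m < A0 ->
  forall j, (j <= m)%nat ->
  Fm S th n g j (/ (A0 - rho / 2 * (INR m - INR j))) <= exp (INR j * c2 / (A0 - rho / 2 * INR m)).
Proof.
  intros Hc Hr HA. induction j; intros Hj.
  - unfold Fm. simpl. unfold Wt, Gs. simpl. unfold nrm. rewrite (rsum_ext n _ (fun _ => 0)).
    rewrite rsum_zero. rewrite Rmult_0_r, exp_0. simpl INR.
    replace (0 * c2 / (A0 - rho / 2 * INR m)) with 0 by (field; lra). rewrite exp_0. lra.
    intros; simpl; ring.
  - set (h := rho / 2). set (u := A0 - h * (INR m - INR (Datatypes.S j))).
    assert (Hm : (INR (Datatypes.S j) <= INR m)) by (apply le_INR; lia).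
    assert (Hu : A0 - h * INR m <= u) by (unfold u, h; pose proof (pos_INR (Datatypes.S j)); nra).
    assert (Hu0 : 0 < A0 - h * INR m) by (unfold h; lra).
    assert (Huh : u - h = A0 - h * (INR m - INR j)) by (unfold u; rewrite S_INR; ring).
    assert (Hh : 0 <= h) by (unfold h; lra).
    assert (Hup : 0 < u - h).
    { rewrite Huh. pose proof (pos_INR j). nra. }
    eapply Rle_trans. apply Fm_step. lia. left; apply Rinv_0_lt_compat; lra.
    eapply Rle_trans. apply Rmult_le_compat_l. left; apply exp_pos.
    apply Fm_mono with (l2 := / (A0 - h * (INR m - INR j))).
    { rewrite <- Huh. fold h. apply (Rmult_le_reg_r (u * (u - h))). nra.
      replace (/ u * (1 + / u * rho / 2) * (u * (u - h))) with (u - h * h / u) by (unfold h; field; lra).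
      replace (/ (u - h) * (u * (u - h))) with u by (field; lra).
      assert (0 <= h * h / u) by (unfold Rdiv; apply Rmult_le_pos; [apply Rmult_le_pos; lra|left; apply Rinv_0_lt_compat; lra]). lra. }
    eapply Rle_trans. apply Rmult_le_compat_l. left; apply exp_pos. apply IHj. lia.
    rewrite <- exp_plus. apply exp_le'. rewrite S_INR.
    assert (/ u * c2 <= c2 / (A0 - h * INR m)).
    { unfold Rdiv. rewrite Rmult_comm. apply Rmult_le_compat_l; auto.
      apply Rinv_le_contravar; auto. }
    unfold h in *. unfold Rdiv in *. nra.
Qed.

Lemma markov_bound A0 tau (ev : list nat -> bool) : 0 <= c2 -> 0 <= rho -> rho / 2 * INR m < A0 ->
  (forall ys, In ys (outcomes S m) -> ev ys = false -> tau < nrm n (Gs g ys m)) ->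
  1 - exp (- tau / A0) * exp (INR m * c2 / (A0 - rho / 2 * INR m)) <= prob S m th ev.
Proof.
  intros Hc Hr HA Hev.
  assert (HA0 : 0 < A0) by (pose proof (pos_INR m); nra).
  pose proof (Fm_bound A0 Hc Hr HA m (Nat.le_refl m)) as HF.
  replace (INR m - INR m) with 0 in HF by ring. rewrite Rmult_0_r, Rminus_0_r in HF.
  assert (E : prob S m th ev = lsumL (outcomes S m) (fun ys => if ev ys then Wt S th m ys else 0)) by reflexivity.
  rewrite E.
  assert (T : lsumL (outcomes S m) (Wt S th m) = 1) by (apply (Wt_total S th m m); auto).
  assert (1 - lsumL (outcomes S m) (fun ys => if ev ys then Wt S th m ys else 0) <=
          exp (- tau / A0) * Fm S th n g m (/ A0)).
  { rewrite <- T. unfold Fm. rewrite <- lsumL_scal. rewrite <- lsumL_minus. apply lsumL_le.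
    intros ys Hys. pose proof (Wt_nonneg S th m ys). destruct (ev ys) eqn:He.
    - replace (Wt S th m ys - Wt S th m ys) with 0 by ring.
      apply Rmult_le_pos. left; apply exp_pos. apply Rmult_le_pos; auto. left; apply exp_pos.
    - pose proof (Hev ys Hys He).
      rewrite Rminus_0_r. rewrite Rmult_comm, Rmult_assoc, <- exp_plus.
      rewrite <- (Rmult_1_r (Wt S th m ys)) at 1. apply Rmult_le_compat_l; auto.
      rewrite <- exp_0. apply exp_le'.
      replace (/ A0 * nrm n (Gs g ys m) + - tau / A0) with ((nrm n (Gs g ys m) - tau) / A0) by (field; lra).
      unfold Rdiv. apply Rmult_le_pos. lra. left; apply Rinv_0_lt_compat; lra. }
  assert (exp (- tau / A0) * Fm S th n g m (/ A0) <= exp (- tau / A0) * exp (INR m * c2 / (A0 - rho / 2 * INR m))).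
  { apply Rmult_le_compat_l; auto. left; apply exp_pos. }
  lra.
Qed.

End MGF.


Definition filt (l : list nat) (y : nat) := filter (fun v => negb (Nat.eqb v y)) l.

Definition gfun (S : nat -> list nat) (th : nat -> R) (t y i : nat) : R :=
  lsum (filt (S t) y) (fun v => pij th v y * ((if Nat.eqb i y then 1 else 0) - (if Nat.eqb i v then 1 else 0))).

Lemma rsum_delta2 n i f : (i < n)%nat -> rsum n (fun j => f j * (if Nat.eqb j i then 1 else 0)) = f i.
Proof.
  intros H. rewrite <- (rsum_delta' n i f H). apply rsum_ext. intros j _.
  rewrite Nat.eqb_sym. auto.
Qed.

Lemma in_filt l y v : In v (filt l y) <-> In v l /\ v <> y.
Proof.
  unfold filt. rewrite filter_In. destruct (Nat.eqb_spec v y); simpl; intuition.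
Qed.

Lemma dot_gfun_filt n S th t y x : (y < n)%nat -> (forall v, In v (S t) -> (v < n)%nat) ->
  dot n x (gfun S th t y) = lsum (filt (S t) y) (fun v => pij th v y * (x y - x v)).
Proof.
  intros Hy Hv. unfold dot, gfun.
  rewrite (rsum_ext n _ (fun i => lsum (filt (S t) y) (fun v => x i * (pij th v y * ((if Nat.eqb i y then 1 else 0) - (if Nat.eqb i v then 1 else 0)))))).
  2: { intros i _. rewrite <- lsum_scal. auto. }
  rewrite <- lsum_rsum. apply lsum_ext. intros v Hvin. apply in_filt in Hvin. destruct Hvin as [Hvin _].
  rewrite (rsum_ext n _ (fun i => pij th v y * (x i * (if Nat.eqb i y then 1 else 0)) - pij th v y * (x i * (if Nat.eqb i v then 1 else 0)))) by (intros; ring).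
  rewrite rsum_minus, !rsum_scal, !rsum_delta2; auto. ring.
Qed.

Lemma dot_gfun n S th t y x : (y < n)%nat -> (forall v, In v (S t) -> (v < n)%nat) ->
  dot n x (gfun S th t y) = lsum (S t) (fun v => pij th v y * (x y - x v)).
Proof.
  intros Hy Hv. rewrite dot_gfun_filt; auto. unfold filt. apply lsum_filter0. ring.
Qed.

Lemma pij_pos th i j : 0 < pij th i j.
Proof. unfold pij. apply Rdiv_lt_0_compat. apply exp_pos. pose proof (exp_pos (th i)); pose proof (exp_pos (th j)); lra. Qed.

Lemma pij_le1 th i j : pij th i j <= 1.
Proof.
  unfold pij. pose proof (exp_pos (th i)); pose proof (exp_pos (th j)).
  apply (Rmult_le_reg_r (exp (th i) + exp (th j))). lra.
  replace (exp (th i) / (exp (th i) + exp (th j)) * (exp (th i) + exp (th j))) with (exp (th i)) by (field; lra). lra.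
Qed.

Lemma pij_sum th i j : pij th i j + pij th j i = 1.
Proof. unfold pij. pose proof (exp_pos (th i)); pose proof (exp_pos (th j)). field. lra. Qed.

Lemma gfun_mean n S th t x : (forall v, In v (S t) -> (v < n)%nat) -> S t <> [] ->
  lsum (S t) (fun y => luce th (S t) y * dot n x (gfun S th t y)) = 0.
Proof.
  intros Hv Hne. set (l := S t) in *.
  pose proof (lsum_exp_pos th l Hne) as HZ.
  set (W := fun y v => exp (th y) * exp (th v) / (lsum l (fun u => exp (th u)) * (exp (th y) + exp (th v)))).
  assert (HW : forall y v, W y v = W v y).
  { intros y v. unfold W. pose proof (exp_pos (th y)); pose proof (exp_pos (th v)). field. split; lra. }
  rewrite (lsum_ext l _ (fun y => lsum l (fun v => W y v * x y) - lsum l (fun v => W y v * x v))).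
  2: { intros y Hy. rewrite dot_gfun by auto. fold l. rewrite <- lsum_minus, <- lsum_scal. apply lsum_ext.
       intros v Hvv. unfold W, luce, pij. pose proof (exp_pos (th y)); pose proof (exp_pos (th v)). field. split; lra. }
  rewrite lsum_minus. rewrite (lsum_swap l l (fun y v => W y v * x v)).
  rewrite (lsum_ext l (fun v => lsum l (fun y => W y v * x v)) (fun y => lsum l (fun v => W y v * x y))).
  ring. intros y _. apply lsum_ext. intros v _. rewrite HW. auto.
Qed.

Lemma lsum_delta_filt l y v f : NoDup l -> In v l -> v <> y ->
  lsum (filt l y) (fun u => f u * (if Nat.eqb v u then 1 else 0)) = f v.
Proof.
  intros Hnd Hv Hvy. apply lsum_delta_in. unfold filt. apply NoDup_filter; auto.
  apply in_filt; auto.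
Qed.

Lemma gfun_norm n S th t y k : NoDup (S t) -> length (S t) = k -> In y (S t) ->
  (forall v, In v (S t) -> (v < n)%nat) ->
  nrm n (gfun S th t y) <= INR k * (INR k - 1).
Proof.
  intros Hnd Hk Hy Hv.
  assert (Hyn : (y < n)%nat) by auto.
  set (g := gfun S th t y).
  assert (E : nrm n g = dot n g g) by (unfold nrm, dot; apply rsum_ext; intros; ring).
  rewrite E. unfold g at 2. rewrite dot_gfun_filt by auto.
  set (s := lsum (filt (S t) y) (fun v => pij th v y)).
  assert (Gy : g y = s).
  { unfold g, gfun, s. apply lsum_ext. intros v Hvin. apply in_filt in Hvin. destruct Hvin as [_ Hvy].
    rewrite Nat.eqb_refl. destruct (Nat.eqb_spec y v). congruence. ring. }
  assert (Gv : forall v, In v (filt (S t) y) -> g v = - pij th v y).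
  { intros v Hvin. pose proof Hvin as Hvin'. apply in_filt in Hvin. destruct Hvin as [Hvin Hvy].
    unfold g, gfun. destruct (Nat.eqb_spec v y). congruence.
    rewrite (lsum_ext _ _ (fun u => - (pij th u y * (if Nat.eqb v u then 1 else 0)))) by (intros; ring).
    rewrite (lsum_ext _ (fun u => - (pij th u y * (if Nat.eqb v u then 1 else 0))) (fun u => (-1) * (pij th u y * (if Nat.eqb v u then 1 else 0)))) by (intros; ring).
    rewrite lsum_scal. rewrite lsum_delta_filt; auto. ring. }
  rewrite (lsum_ext _ _ (fun v => s * pij th v y + pij th v y * pij th v y)).
  2: { intros v Hvin. rewrite Gy, Gv; auto. ring. }
  rewrite lsum_plus, lsum_scal. fold s.
  assert (Hlen : INR (length (filt (S t) y)) = INR k - 1).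
  { unfold filt. rewrite filter_length_nodup; auto. rewrite minus_INR. rewrite Hk. simpl. ring.
    destruct (S t). destruct Hy. simpl. lia. }
  assert (Hs : s <= INR k - 1).
  { unfold s. rewrite <- Hlen. rewrite <- (Rmult_1_r (INR _)). rewrite <- lsum_const.
    apply lsum_le. intros; apply pij_le1. }
  assert (Hs0 : 0 <= s) by (unfold s; apply lsum_nonneg; intros; left; apply pij_pos).
  assert (H2 : lsum (filt (S t) y) (fun v => pij th v y * pij th v y) <= s).
  { unfold s. apply lsum_le. intros. pose proof (pij_pos th i y). pose proof (pij_le1 th i y). nra. }
  nra.
Qed.

Lemma lsum_le_nrm n l x : NoDup l -> (forall i, In i l -> (i < n)%nat) ->
  lsum l (fun i => x i ^ 2) <= nrm n x.
Proof.
  intros Hnd Hb. rewrite (lsum_indicator l n) by auto. unfold nrm. apply rsum_le.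
  intros i _. destruct (in_dec Nat.eq_dec i l). lra. apply pow2_ge_0.
Qed.

Lemma range_general n S th t k x : NoDup (S t) -> length (S t) = k -> (1 <= k)%nat ->
  (forall v, In v (S t) -> (v < n)%nat) ->
  exists lo hi, lo <= 0 <= hi /\ (hi - lo) ^ 2 <= 4 * (INR k * (INR k - 1)) * nrm n x /\
    forall y, In y (S t) -> lo <= dot n x (gfun S th t y) <= hi.
Proof.
  intros Hnd Hk Hk1 Hv. set (c2 := INR k * (INR k - 1)).
  assert (Hc2 : 0 <= c2). { unfold c2. apply le_INR in Hk1. simpl in Hk1. nra. }
  pose proof (nrm_nonneg n x).
  set (R := sqrt (c2 * nrm n x)).
  assert (HR : 0 <= R) by apply sqrt_pos.
  assert (HR2 : R * R = c2 * nrm n x) by (apply sqrt_sqrt; nra).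
  exists (- R), R. split. lra. split. nra.
  intros y Hy. pose proof (cauchy_schwarz n x (gfun S th t y)) as Hcs.
  pose proof (gfun_norm n S th t y k Hnd Hk Hy Hv) as Hg. fold c2 in Hg.
  assert (dot n x (gfun S th t y) ^ 2 <= R * R).
  { rewrite HR2. eapply Rle_trans. apply Hcs. rewrite (Rmult_comm c2). apply Rmult_le_compat_l; auto. }
  split; nra.
Qed.

Lemma range_two n S th t x : NoDup (S t) -> length (S t) = 2%nat ->
  (forall v, In v (S t) -> (v < n)%nat) ->
  exists lo hi, lo <= 0 <= hi /\ (hi - lo) ^ 2 <= 2 * nrm n x /\
    forall y, In y (S t) -> lo <= dot n x (gfun S th t y) <= hi.
Proof.
  intros Hnd Hk Hv.
  pose proof (lsum_le_nrm n (S t) x Hnd Hv) as Hn.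
  assert (Hda : forall y, In y (S t) -> dot n x (gfun S th t y) = lsum (S t) (fun v => pij th v y * (x y - x v))).
  { intros y Hy. apply dot_gfun; auto. }
  destruct (S t) as [|a [|c [|d l]]]; simpl in Hk; try lia.
  rewrite !lsum_cons, lsum_nil in Hn.
  set (D := x a - x c).
  assert (Ea : dot n x (gfun S th t a) = pij th c a * D).
  { rewrite Hda by (simpl; auto). rewrite !lsum_cons, lsum_nil. unfold D. ring. }
  assert (Ec : dot n x (gfun S th t c) = - (pij th a c * D)).
  { rewrite Hda by (simpl; auto). rewrite !lsum_cons, lsum_nil. unfold D. ring. }
  pose proof (pij_sum th a c). pose proof (pij_pos th a c). pose proof (pij_pos th c a).
  assert (HD : D ^ 2 <= 2 * nrm n x).
  { unfold D. assert (0 <= (x a + x c) ^ 2) by apply pow2_ge_0. nra. }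
  destruct (Rle_dec 0 D).
  - exists (- (pij th a c * D)), (pij th c a * D). split. split; nra. split.
    + replace (pij th c a * D - - (pij th a c * D)) with D by nra. auto.
    + intros y [<-|[<-|[]]]. rewrite Ea. split; nra. rewrite Ec. split; nra.
  - exists (pij th c a * D), (- (pij th a c * D)). split. split; nra. split.
    + replace (- (pij th a c * D) - pij th c a * D) with (- D) by nra. nra.
    + intros y [<-|[<-|[]]]. rewrite Ea. split; nra. rewrite Ec. split; nra.
Qed.


Lemma lap_row n M x i : (i < n)%nat -> M i i = 0 ->
  rsum n (fun j => Lap n M i j * x j) = rsum n (fun j => M i j) * x i - rsum n (fun j => M i j * x j).
Proof.
  intros Hi Hd. rewrite <- (rsum_delta n i (fun j => rsum n (fun l => M i l) * x j)) by auto.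
  rewrite <- rsum_minus. apply rsum_ext. intros j Hj. unfold Lap.
  destruct (Nat.eqb_spec i j), (Nat.eqb_spec j i); subst; try lia.
  rewrite Hd. ring. ring.
Qed.

Lemma lap_form n M x : (forall i j, (i < n)%nat -> (j < n)%nat -> M i j = M j i) ->
  (forall i, (i < n)%nat -> M i i = 0) ->
  rsum n (fun i => x i * rsum n (fun j => Lap n M i j * x j)) =
  / 2 * rsum n (fun i => rsum n (fun j => M i j * (x i - x j) ^ 2)).
Proof.
  intros Hs Hd.
  rewrite (rsum_ext n _ (fun i => rsum n (fun j => M i j * x i * x i) - rsum n (fun j => M i j * x i * x j))).
  2: { intros i Hi. rewrite lap_row by auto.
       rewrite (rsum_ext n (fun j => M i j * x i * x i) (fun j => (x i * x i) * M i j)) by (intros; ring).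
       rewrite (rsum_ext n (fun j => M i j * x i * x j) (fun j => x i * (M i j * x j))) by (intros; ring).
       rewrite !rsum_scal. change (rsum n (M i)) with (rsum n (fun j => M i j)). ring. }
  rewrite rsum_minus.
  rewrite (rsum_ext n (fun i => rsum n (fun j => M i j * (x i - x j) ^ 2)) (fun i => rsum n (fun j => M i j * x i * x i) + rsum n (fun j => M i j * x j * x j) - 2 * rsum n (fun j => M i j * x i * x j))).
  2: { intros i Hi. rewrite <- rsum_scal, <- rsum_plus, <- rsum_minus. apply rsum_ext; intros; ring. }
  rewrite rsum_minus, rsum_plus, rsum_scal.
  assert (E : rsum n (fun i => rsum n (fun j => M i j * x j * x j)) = rsum n (fun i => rsum n (fun j => M i j * x i * x i))).
  { rewrite rsum_swap. apply rsum_ext. intros i Hi. apply rsum_ext. intros j Hj. rewrite Hs; auto. }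
  rewrite E. field.
Qed.

Lemma lap_rowsum n M i : (i < n)%nat -> M i i = 0 -> rsum n (fun j => Lap n M i j) = 0.
Proof.
  intros Hi Hd. pose proof (lap_row n M (fun _ => 1) i Hi Hd) as H. cbv beta in H.
  rewrite (rsum_ext n (fun j => Lap n M i j * 1) (fun j => Lap n M i j)) in H by (intros; ring).
  rewrite H. rewrite (rsum_ext n (fun j => M i j * 1) (fun j => M i j)) by (intros; ring). ring.
Qed.

Lemma lap_sym n M i j : (M i j = M j i) -> Lap n M i j = Lap n M j i.
Proof.
  intros H. unfold Lap. destruct (Nat.eqb_spec i j), (Nat.eqb_spec j i); subst; try lia; auto.
  rewrite H; auto.
Qed.

Definition ind (S : nat -> list nat) (t i : nat) : R := if in_dec Nat.eq_dec i (S t) then 1 else 0.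

Lemma Mmat_ind n m S i j : i <> j -> Mmat n m S i j = INR n / INR m * rsum m (fun t => ind S t i * ind S t j).
Proof.
  intros H. unfold Mmat. destruct (Nat.eqb_spec i j). contradiction. f_equal. apply rsum_ext.
  intros t _. unfold ind. destruct (in_dec Nat.eq_dec i (S t)), (in_dec Nat.eq_dec j (S t)); ring.
Qed.

Lemma Mmat_sym n m S i j : Mmat n m S i j = Mmat n m S j i.
Proof.
  destruct (Nat.eq_dec i j). subst; auto.
  rewrite !Mmat_ind by auto. f_equal. apply rsum_ext. intros; ring.
Qed.

Lemma Mmat_diag n m S i : Mmat n m S i i = 0.
Proof. unfold Mmat. rewrite Nat.eqb_refl. auto. Qed.

Lemma M_form n m S x : (forall t, (t < m)%nat -> NoDup (S t) /\ (forall i, In i (S t) -> (i < n)%nat)) ->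
  rsum n (fun i => rsum n (fun j => Mmat n m S i j * (x i - x j) ^ 2)) =
  INR n / INR m * rsum m (fun t => lsum (S t) (fun i => lsum (S t) (fun j => (x i - x j) ^ 2))).
Proof.
  intros HS.
  rewrite (rsum_ext n _ (fun i => rsum n (fun j => INR n / INR m * rsum m (fun t => ind S t i * ind S t j * (x i - x j) ^ 2)))).
  2: { intros i Hi. apply rsum_ext. intros j Hj. destruct (Nat.eq_dec i j).
       - subst. replace (x j - x j) with 0 by ring. rewrite (rsum_ext m _ (fun _ => 0)). rewrite rsum_zero. simpl; ring.
         intros; simpl; ring.
       - rewrite Mmat_ind by auto. rewrite Rmult_assoc. f_equal. rewrite Rmult_comm, <- rsum_scal. apply rsum_ext; intros; ring. }
  rewrite (rsum_ext n _ (fun i => INR n / INR m * rsum n (fun j => rsum m (fun t => ind S t i * ind S t j * (x i - x j) ^ 2)))).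
  2: { intros. rewrite rsum_scal. auto. }
  rewrite rsum_scal. f_equal.
  rewrite (rsum_ext n _ (fun i => rsum m (fun t => rsum n (fun j => ind S t i * ind S t j * (x i - x j) ^ 2)))).
  2: { intros. apply rsum_swap. }
  rewrite rsum_swap. apply rsum_ext. intros t Ht. destruct (HS t Ht) as [Hnd Hb].
  rewrite (lsum_indicator (S t) n) by auto. apply rsum_ext. intros i Hi.
  unfold ind. destruct (in_dec Nat.eq_dec i (S t)).
  - rewrite (lsum_indicator (S t) n) by auto. apply rsum_ext. intros j Hj.
    destruct (in_dec Nat.eq_dec j (S t)); ring.
  - rewrite (rsum_ext n _ (fun _ => 0)). apply rsum_zero. intros; ring.
Qed.

Lemma star_ineq l (a : R) (x : nat -> R) :
  lsum l (fun i => lsum l (fun j => (x i - x j) ^ 2)) <= 2 * INR (length l) * lsum l (fun v => (a - x v) ^ 2).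
Proof.
  set (k := INR (length l)). set (s1 := lsum l x). set (s2 := lsum l (fun v => x v ^ 2)).
  assert (E1 : lsum l (fun v => (a - x v) ^ 2) = k * a ^ 2 - 2 * a * s1 + s2).
  { rewrite (lsum_ext l _ (fun v => (a ^ 2 + x v ^ 2) - 2 * a * x v)) by (intros; ring).
    rewrite lsum_minus, lsum_plus, lsum_const, lsum_scal. unfold k, s1, s2. ring. }
  assert (E2 : lsum l (fun i => lsum l (fun j => (x i - x j) ^ 2)) = 2 * k * s2 - 2 * s1 ^ 2).
  { rewrite (lsum_ext l _ (fun i => k * x i ^ 2 - 2 * x i * s1 + s2)).
    - rewrite lsum_plus, lsum_minus, lsum_scal, lsum_const.
      rewrite (lsum_ext l (fun i => 2 * x i * s1) (fun i => (2 * s1) * x i)) by (intros; ring).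
      rewrite lsum_scal. unfold k, s1, s2. ring.
    - intros i _. rewrite (lsum_ext l _ (fun j => (x i ^ 2 + x j ^ 2) - 2 * x i * x j)) by (intros; ring).
      rewrite lsum_minus, lsum_plus, lsum_const, lsum_scal. unfold k, s1, s2. ring. }
  rewrite E1, E2. assert (0 <= (k * a - s1) ^ 2) by apply pow2_ge_0. nra.
Qed.


Lemma rsum_mul_inner n m w g : rsum n (fun i => w i * rsum m (fun a => g a i)) = rsum m (fun a => rsum n (fun i => w i * g a i)).
Proof.
  rewrite <- rsum_swap. apply rsum_ext. intros i _. rewrite <- rsum_scal. auto.
Qed.

Section Spec.
Variables (n : nat) (V : nat -> nat -> R).
Hypothesis Hc : forall i j, (i < n)%nat -> (j < n)%nat ->
     rsum n (fun a => V a i * V a j) = if Nat.eqb i j then 1 else 0.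

Definition coef (x : nat -> R) (a : nat) := rsum n (fun j => V a j * x j).

Lemma expand x i : (i < n)%nat -> x i = rsum n (fun a => coef x a * V a i).
Proof.
  intros Hi. unfold coef.
  transitivity (rsum n (fun a => rsum n (fun j => V a j * x j * V a i))).
  2: { apply rsum_ext; intros a _. rewrite Rmult_comm, <- rsum_scal. apply rsum_ext; intros; ring. }
  rewrite rsum_swap.
  transitivity (rsum n (fun j => x j * rsum n (fun a => V a j * V a i))).
  2: { apply rsum_ext; intros j _. rewrite <- rsum_scal. apply rsum_ext; intros; ring. }
  rewrite (rsum_ext n _ (fun j => x j * (if Nat.eqb i j then 1 else 0))).
  rewrite rsum_delta'; auto.
  intros j Hj. rewrite Hc by auto. rewrite Nat.eqb_sym. auto.
Qed.

Lemma pair_expand w f : rsum n (fun i => w i * rsum n (fun a => f a * V a i)) = rsum n (fun a => f a * coef w a).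
Proof.
  rewrite rsum_mul_inner. apply rsum_ext. intros a _. unfold coef. rewrite <- rsum_scal.
  apply rsum_ext. intros; ring.
Qed.

Lemma parseval x : rsum n (fun i => x i * x i) = rsum n (fun a => coef x a * coef x a).
Proof.
  rewrite <- pair_expand. apply rsum_ext. intros i Hi. rewrite <- expand; auto.
Qed.

End Spec.

Lemma spectral n L mu V x : (2 <= n)%nat -> sorted_eigendecomp n L mu V ->
  (forall i j, (i < n)%nat -> (j < n)%nat -> L i j = L j i) ->
  (forall i, (i < n)%nat -> rsum n (fun j => L i j) = 0) -> 0 < mu 1%nat -> rsum n x = 0 ->
  mu 1%nat * rsum n (fun i => x i * x i) <= rsum n (fun i => x i * rsum n (fun j => L i j * x j)).
Proof.
  intros Hn [Horth [Heig Hsort]] Hsym Hrow Hmu Hx.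
  pose proof (MC.complete n V Horth) as Hc.
  set (c := coef n V x).
  assert (Hq : rsum n (fun i => x i * rsum n (fun j => L i j * x j)) = rsum n (fun a => mu a * c a * c a)).
  { rewrite (rsum_ext n (fun i => x i * rsum n (fun j => L i j * x j)) (fun i => x i * rsum n (fun a => (c a * mu a) * V a i))).
    - rewrite pair_expand. apply rsum_ext; intros; unfold c; ring.
    - intros i Hi. f_equal.
      rewrite (rsum_ext n (fun j => L i j * x j) (fun j => L i j * rsum n (fun a => c a * V a j))).
      2: { intros j Hj. f_equal. apply (expand n V Hc x j Hj). }
      rewrite rsum_mul_inner. apply rsum_ext. intros a Ha.
      rewrite Rmult_assoc, <- Heig by auto. rewrite <- rsum_scal.
      apply rsum_ext; intros; ring. }
  set (one := fun _ : nat => 1).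
  set (d := coef n V one).
  assert (Hd : forall a, (a < n)%nat -> mu a * d a = 0).
  { intros a Ha. unfold d, coef, one. rewrite <- rsum_scal.
    rewrite (rsum_ext n _ (fun i => rsum n (fun j => L i j * V a j))).
    2: { intros i Hi. rewrite Heig; auto. ring. }
    rewrite rsum_swap.
    rewrite (rsum_ext n _ (fun j => V a j * rsum n (fun i => L j i))).
    2: { intros j Hj. rewrite <- rsum_scal. apply rsum_ext. intros i Hi. rewrite Hsym; auto. ring. }
    rewrite (rsum_ext n _ (fun j => 0)). apply rsum_zero.
    intros j Hj. rewrite Hrow; auto. ring. }
  destruct n as [|n']. lia.
  assert (Hd1 : forall a, (a < n')%nat -> d (S a) = 0).
  { intros a Ha. pose proof (Hd (S a) ltac:(lia)).
    assert (0 < mu (S a)). { apply Rlt_le_trans with (mu 1%nat); auto. apply Hsort; lia. }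
    destruct (Rmult_integral _ _ H); auto. lra. }
  assert (Hn0 : rsum (S n') (fun a => d a * d a) = d O * d O).
  { rewrite rsum_shift. rewrite (rsum_ext n' _ (fun _ => 0)). rewrite rsum_zero. ring.
    intros a Ha. rewrite Hd1; auto. ring. }
  assert (Hnpos : 0 < d O * d O).
  { rewrite <- Hn0. unfold d. rewrite <- parseval; auto. unfold one.
    rewrite (rsum_ext _ _ (fun _ => 1)) by (intros; ring).
    replace (rsum (S n') (fun _ => 1)) with (INR (S n')). apply lt_0_INR; lia.
    clear. induction n'. simpl. ring. rewrite S_INR, IHn'. simpl. ring. }
  assert (Hc0 : c O = 0).
  { assert (E : rsum (S n') x = rsum (S n') (fun a => d a * c a)).
    { unfold c, d. rewrite <- pair_expand; auto. apply rsum_ext. intros i Hi.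
      rewrite <- expand; auto. unfold one. ring. }
    rewrite Hx, rsum_shift in E. rewrite (rsum_ext n' _ (fun _ => 0)) in E.
    rewrite rsum_zero in E. assert (d O <> 0) by (intros Hc'; rewrite Hc' in Hnpos; lra).
    assert (d O * c O = 0) by lra. destruct (Rmult_integral _ _ H0); auto. contradiction.
    intros a Ha. rewrite Hd1; auto. ring. }
  rewrite Hq, (parseval (S n') V Hc x). fold c.
  rewrite !rsum_shift. rewrite Hc0. rewrite !Rmult_0_r, !Rplus_0_l.
  rewrite <- rsum_scal. apply rsum_le. intros a Ha.
  assert (mu 1%nat <= mu (S a)) by (apply Hsort; lia).
  assert (0 <= c (S a) * c (S a)) by apply Rle_0_sqr. nra.
Qed.


Lemma pij_sig th i j : pij th i j = sig (th i - th j).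
Proof.
  unfold pij, sig. rewrite Ropp_minus_distr. unfold Rminus. rewrite exp_plus, exp_Ropp.
  pose proof (exp_pos (th i)); pose proof (exp_pos (th j)). field. split; lra.
Qed.

Lemma term_ineq b ths thh y v :
  -b <= ths y <= b -> -b <= ths v <= b -> -b <= thh y <= b -> -b <= thh v <= b ->
  ln (pij thh y v) - ln (pij ths y v) <=
  pij ths v y * ((thh y - ths y) - (thh v - ths v)) - exp (-(2*b)) / 8 * ((thh y - ths y) - (thh v - ths v)) ^ 2.
Proof.
  intros H1 H2 H3 H4. rewrite !pij_sig.
  pose proof (lsig_ineq b (ths y - ths v) (thh y - thh v) ltac:(lra) ltac:(lra)) as H.
  assert (E : 1 - sig (ths y - ths v) = sig (ths v - ths y)).
  { rewrite <- !pij_sig. pose proof (pij_sum ths y v). lra. }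
  rewrite E in H. replace ((thh y - ths y) - (thh v - ths v)) with ((thh y - thh v) - (ths y - ths v)) by ring.
  exact H.
Qed.

Lemma det_bound n m k S b ths thh ys mu V :
  (1 <= m)%nat -> (2 <= n)%nat ->
  (forall t, (t < m)%nat -> NoDup (S t) /\ length (S t) = k /\ (forall i, In i (S t) -> (i < n)%nat)) ->
  in_Theta n b ths -> in_Theta n b thh -> ell S m ths ys <= ell S m thh ys ->
  (forall t, (t < m)%nat -> In (yat ys t) (S t)) ->
  sorted_eigendecomp n (Lap n (Mmat n m S)) mu V -> 0 < mu 1%nat -> (1 <= k)%nat ->
  (exp (-(2*b)) / 8 * INR m * mu 1%nat / (INR k * INR n)) ^ 2 * nrm n (fun i => thh i - ths i)
    <= nrm n (Gs (gfun S ths) ys m).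
Proof.
  intros Hm Hn HS [Hsb Hss] [Hhb Hhs] Hell Hys Hsd Hmu Hk.
  set (Dl := fun i => thh i - ths i).
  set (C := exp (-(2*b)) / 8).
  set (G := Gs (gfun S ths) ys m).
  set (Q := rsum m (fun t => lsum (filt (S t) (yat ys t)) (fun v => (Dl (yat ys t) - Dl v) ^ 2))).
  assert (Hyn : forall t, (t < m)%nat -> (yat ys t < n)%nat).
  { intros t Ht. destruct (HS t Ht) as [_ [_ Hb]]. apply Hb. apply Hys; auto. }
  assert (Ha : 0 <= dot n Dl G - C * Q).
  { assert (E : dot n Dl G = rsum m (fun t => lsum (filt (S t) (yat ys t)) (fun v => pij ths v (yat ys t) * (Dl (yat ys t) - Dl v)))).
    { unfold dot, G, Gs. rewrite (rsum_ext n _ (fun i => rsum m (fun t => Dl i * gfun S ths t (yat ys t) i))).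
      2: { intros. rewrite rsum_scal. auto. }
      rewrite rsum_swap. apply rsum_ext. intros t Ht. destruct (HS t Ht) as [_ [_ Hb]].
      transitivity (dot n Dl (gfun S ths t (yat ys t))). reflexivity. apply dot_gfun_filt; auto. }
    rewrite E. unfold Q. rewrite <- rsum_scal, <- rsum_minus.
    apply Rle_trans with (ell S m thh ys - ell S m ths ys). lra.
    unfold ell. rewrite <- rsum_minus. apply rsum_le. intros t Ht.
    destruct (HS t Ht) as [_ [_ Hb]]. rewrite <- lsum_scal, <- !lsum_minus.
    change (filter (fun v => negb (Nat.eqb v (yat ys t))) (S t)) with (filt (S t) (yat ys t)).
    apply lsum_le. intros v Hv. apply in_filt in Hv. destruct Hv as [Hv _].
    assert (Hvn : (v < n)%nat) by auto. pose proof (Hyn t Ht).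
    pose proof (term_ineq b ths thh (yat ys t) v (Hsb _ ltac:(auto)) (Hsb _ Hvn) (Hhb _ ltac:(auto)) (Hhb _ Hvn)).
    unfold Dl, C. lra. }
  set (kap := C * INR m * mu 1%nat / (INR k * INR n)).
  assert (Hkpos : 0 < INR k) by (apply lt_0_INR; lia).
  assert (Hnpos : 0 < INR n) by (apply lt_0_INR; lia).
  assert (Hmpos : 0 < INR m) by (apply lt_0_INR; lia).
  assert (HC : 0 < C) by (unfold C; pose proof (exp_pos (-(2*b))); lra).
  assert (Hkap : 0 < kap).
  { unfold kap. apply Rdiv_lt_0_compat. apply Rmult_lt_0_compat; auto. apply Rmult_lt_0_compat; auto.
    apply Rmult_lt_0_compat; auto. }
  set (quad := rsum n (fun i => Dl i * rsum n (fun j => Lap n (Mmat n m S) i j * Dl j))).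
  assert (Hquad : mu 1%nat * rsum n (fun i => Dl i * Dl i) <= quad).
  { apply (spectral n (Lap n (Mmat n m S)) mu V Dl); auto.
    - intros i j _ _. apply lap_sym. apply Mmat_sym.
    - intros i Hi. apply lap_rowsum; auto. apply Mmat_diag.
    - unfold Dl. rewrite rsum_minus, Hhs, Hss. ring. }
  assert (Hlf : quad = / 2 * rsum n (fun i => rsum n (fun j => Mmat n m S i j * (Dl i - Dl j) ^ 2))).
  { apply lap_form. intros; apply Mmat_sym. intros; apply Mmat_diag. }
  assert (HMf := M_form n m S Dl ltac:(intros t Ht; destruct (HS t Ht) as [? [? ?]]; split; auto)).
  assert (HQ : INR m * mu 1%nat / (INR k * INR n) * nrm n Dl <= Q).
  { unfold Q.
    apply Rle_trans with (rsum m (fun t => / (2 * INR k) * lsum (S t) (fun i => lsum (S t) (fun j => (Dl i - Dl j) ^ 2)))).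
    2: { apply rsum_le. intros t Ht. destruct (HS t Ht) as [_ [Hlen _]].
         unfold filt. rewrite lsum_filter0 by ring.
         pose proof (star_ineq (S t) (Dl (yat ys t)) Dl) as Hst. rewrite Hlen in Hst.
         apply (Rmult_le_reg_l (2 * INR k)). lra.
         rewrite <- Rmult_assoc, Rinv_r, Rmult_1_l by lra. auto. }
    rewrite rsum_scal.
    assert (E : rsum m (fun t => lsum (S t) (fun i => lsum (S t) (fun j => (Dl i - Dl j) ^ 2))) = INR m / INR n * (2 * quad)).
    { rewrite Hlf, HMf. field. split; lra. }
    rewrite E.
    assert (En : nrm n Dl = rsum n (fun i => Dl i * Dl i)) by (unfold nrm; apply rsum_ext; intros; ring).
    rewrite En.
    apply Rle_trans with (/ (2 * INR k) * (INR m / INR n * (2 * (mu 1%nat * rsum n (fun i => Dl i * Dl i))))).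
    { right. field. split; lra. }
    apply Rmult_le_compat_l. left; apply Rinv_0_lt_compat; lra.
    apply Rmult_le_compat_l. left; apply Rdiv_lt_0_compat; lra. lra. }
  assert (Hk1 : kap * nrm n Dl <= dot n Dl G).
  { assert (kap * nrm n Dl = C * (INR m * mu 1%nat / (INR k * INR n) * nrm n Dl)) by (unfold kap; field; split; lra).
    rewrite H. apply Rle_trans with (C * Q). apply Rmult_le_compat_l; lra. lra. }
  assert (Hamgm : dot n Dl G <= kap / 2 * nrm n Dl + / (2 * kap) * nrm n G).
  { unfold dot, nrm. rewrite <- !rsum_scal, <- rsum_plus. apply rsum_le. intros i _.
    assert (0 <= (kap * Dl i - G i) ^ 2) by apply pow2_ge_0.
    apply (Rmult_le_reg_l (2 * kap)). lra.
    replace (2 * kap * (kap / 2 * Dl i ^ 2 + / (2 * kap) * G i ^ 2)) with (kap ^ 2 * Dl i ^ 2 + G i ^ 2) by (field; lra).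
    nra. }
  pose proof (nrm_nonneg n Dl). pose proof (nrm_nonneg n G).
  change (kap ^ 2 * nrm n Dl <= nrm n G).
  assert (kap / 2 * nrm n Dl <= / (2 * kap) * nrm n G) by lra.
  apply (Rmult_le_reg_l (/ (2 * kap))). apply Rinv_0_lt_compat; lra.
  replace (/ (2 * kap) * (kap ^ 2 * nrm n Dl)) with (kap / 2 * nrm n Dl) by (field; lra). lra.
Qed.


Theorem theorem5
  (n m k : nat) (S : nat -> list nat) (b : R) (thstar : nat -> R)
  (thhat : list nat -> nat -> R) (mu : nat -> R) (V : nat -> nat -> R) :
  (1 <= m)%nat ->
  (2 <= k)%nat ->
  (forall t, (t < m)%nat ->
     NoDup (S t) /\ length (S t) = k /\ (forall i, In i (S t) -> (i < n)%nat)) ->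
  in_Theta n b thstar ->
  (forall ys, In ys (outcomes S m) ->
     in_Theta n b (thhat ys) /\
     forall th, in_Theta n b th -> ell S m th ys <= ell S m (thhat ys) ys) ->
  sorted_eigendecomp n (Lap n (Mmat n m S)) mu V ->
  mu 1%nat >= 128 * (INR k - 1) ^ 2 * exp (2 * b) * INR n * ln (INR n) / INR m ->
  let D := 16 * sqrt 2 * sqrt (INR k * (INR k - 1) ^ 3) * exp (2 * b) in
  prob S m thstar
    (fun ys => Rleb (MSE n (thhat ys) thstar)
                    (D ^ 2 * (INR n * (ln (INR n) + 2)) / (mu 1%nat) ^ 2 * (1 / INR m)))
  >= 1 - 3 / INR n.
Proof.
  intros Hm Hk HS Hths Hhat Hsd Hmu D.
  assert (Hkn : (k <= n)%nat).
  { destruct (HS O ltac:(lia)) as [Hnd [Hlen Hb]]. rewrite <- Hlen.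
    rewrite <- (length_seq n 0). apply NoDup_incl_length; auto.
    intros i Hi. apply in_seq. assert (i < n)%nat by (apply Hb; auto). lia. }
  assert (Hn2 : (2 <= n)%nat) by lia.
  assert (Hnpos : 0 < INR n) by (apply lt_0_INR; lia).
  assert (Hmpos : 0 < INR m) by (apply lt_0_INR; lia).
  assert (Hkr : 2 <= INR k) by (apply (le_INR 2); lia).
  assert (Hln : 0 < ln (INR n)).
  { rewrite <- ln_1. apply ln_increasing. lra. apply (lt_INR 1); lia. }
  assert (Hb0 : 0 <= b) by (destruct Hths as [Hb _]; destruct (Hb O ltac:(lia)); lra).
  assert (Hmu1 : 0 < mu 1%nat).
  { apply Rlt_le_trans with (128 * (INR k - 1) ^ 2 * exp (2 * b) * INR n * ln (INR n) / INR m); [|lra].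
    apply Rdiv_lt_0_compat; auto. pose proof (exp_pos (2*b)).
    repeat apply Rmult_lt_0_compat; try lra; apply pow_lt; lra. }
  set (c2 := INR k * (INR k - 1)).
  set (rho := if Nat.eq_dec k 2 then 2 else 4 * c2).
  set (gam := 8 * (INR k - 1) ^ 3 / INR k).
  set (A0 := gam * INR m).
  set (tau := gam * INR m * (ln (INR n) + 2)).
  set (ev := fun ys => Rleb (MSE n (thhat ys) thstar)
                    (D ^ 2 * (INR n * (ln (INR n) + 2)) / (mu 1%nat) ^ 2 * (1 / INR m))).
  assert (Hc2 : 0 <= c2) by (unfold c2; nra).
  assert (Hrho : 0 <= rho) by (unfold rho; destruct (Nat.eq_dec k 2); lra).
  assert (Hgam : 2 * (gam - rho / 2) >= c2 /\ rho / 2 < gam).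
  { unfold gam, rho, c2. destruct (Nat.eq_dec k 2).
    - rewrite e. simpl INR. split; field_simplify; lra.
    - assert (Hk3 : INR 3 <= INR k) by (apply le_INR; lia). simpl in Hk3.
      set (x := INR k) in *.
      assert (E : 8 * (x - 1) ^ 3 / x = 8 * (x - 1) ^ 3 * / x) by reflexivity.
      assert (Hx : 0 < / x) by (apply Rinv_0_lt_compat; lra).
      assert (Hxx : x * / x = 1) by (field; lra).
      assert (H16 : 16 * (x - 1) ^ 2 >= 5 * x ^ 2) by nra.
      split.
      + apply Rle_ge. apply (Rmult_le_reg_r x). lra.
        replace (2 * (8 * (x - 1) ^ 3 / x - 4 * (x * (x - 1)) / 2) * x) with (16 * (x - 1) ^ 3 - 4 * x * x * (x - 1)) by (field; lra).
        nra.
      + apply (Rmult_lt_reg_r x). lra.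
        replace (8 * (x - 1) ^ 3 / x * x) with (8 * (x - 1) ^ 3) by (field; lra). nra. }
  destruct Hgam as [Hgam1 Hgam2].
  assert (HA : rho / 2 * INR m < A0) by (unfold A0; nra).
  assert (HSne : forall t, (t < m)%nat -> S t <> []).
  { intros t Ht Hc. destruct (HS t Ht) as [_ [Hl _]]. rewrite Hc in Hl. simpl in Hl. lia. }
  pose proof (markov_bound S thstar n m (gfun S thstar) c2 rho HSne
    (fun t x Ht => gfun_mean n S thstar t x (proj2 (proj2 (HS t Ht))) (HSne t Ht))
    (fun t y Ht Hy => gfun_norm n S thstar t y k (proj1 (HS t Ht)) (proj1 (proj2 (HS t Ht))) Hy (proj2 (proj2 (HS t Ht))))
  ) as HMB.
  assert (Hrange : forall t x, (t < m)%nat -> exists lo hi, lo <= 0 <= hi /\ (hi - lo) ^ 2 <= rho * nrm n x /\ forall y, In y (S t) -> lo <= dot n x (gfun S thstar t y) <= hi).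
  { intros t x Ht. destruct (HS t Ht) as [Hnd [Hl Hb]]. unfold rho. destruct (Nat.eq_dec k 2).
    - rewrite e in Hl. apply range_two; auto.
    - apply range_general with (k := k); auto. lia. }
  specialize (HMB Hrange A0 tau ev Hc2 Hrho HA).
  assert (Hev : forall ys, In ys (outcomes S m) -> ev ys = false -> tau < nrm n (Gs (gfun S thstar) ys m)).
  { intros ys Hys Hevf. destruct (Rlt_le_dec tau (nrm n (Gs (gfun S thstar) ys m))) as [Hlt|Hle]; auto.
    exfalso. destruct (Hhat ys Hys) as [Hth Hopt].
    destruct (outcomes_prop S m ys Hys) as [_ Hyst].
    pose proof (det_bound n m k S b thstar (thhat ys) ys mu V Hm Hn2 HS Hths Hth (Hopt thstar Hths)
       Hyst Hsd Hmu1 ltac:(lia)) as Hdet.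
    set (kap := exp (- (2 * b)) / 8 * INR m * mu 1%nat / (INR k * INR n)) in Hdet.
    assert (Hkap : 0 < kap).
    { unfold kap. pose proof (exp_pos (-(2*b))). apply Rdiv_lt_0_compat; [|nra].
      apply Rmult_lt_0_compat; [|lra]. apply Rmult_lt_0_compat; lra. }
    assert (Hmse : MSE n (thhat ys) thstar <= / INR n * tau / kap ^ 2).
    { unfold MSE. change (rsum n (fun i => (thhat ys i - thstar i) ^ 2)) with (nrm n (fun i => thhat ys i - thstar i)).
      unfold Rdiv. rewrite Rmult_assoc. apply Rmult_le_compat_l. left; apply Rinv_0_lt_compat; lra.
      apply (Rmult_le_reg_l (kap ^ 2)). apply pow_lt; lra.
      replace (kap ^ 2 * (tau * / kap ^ 2)) with tau by (field; lra). lra. }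
    assert (Hbound : / INR n * tau / kap ^ 2 = D ^ 2 * (INR n * (ln (INR n) + 2)) / (mu 1%nat) ^ 2 * (1 / INR m)).
    { unfold kap, tau, gam, D.
      assert (Hs2 : sqrt 2 * sqrt 2 = 2) by (apply sqrt_sqrt; lra).
      assert (Hsk : sqrt (INR k * (INR k - 1) ^ 3) * sqrt (INR k * (INR k - 1) ^ 3) = INR k * (INR k - 1) ^ 3).
      { apply sqrt_sqrt. apply Rmult_le_pos. lra. apply pow_le. lra. }
      rewrite exp_Ropp. pose proof (exp_pos (2*b)).
      replace ((16 * sqrt 2 * sqrt (INR k * (INR k - 1) ^ 3) * exp (2 * b)) ^ 2) with
        (256 * (sqrt 2 * sqrt 2) * (sqrt (INR k * (INR k - 1) ^ 3) * sqrt (INR k * (INR k - 1) ^ 3)) * exp (2 * b) ^ 2) by ring.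
      rewrite Hs2, Hsk. field. repeat split; lra. }
    unfold ev in Hevf. unfold Rleb in Hevf. destruct (Rle_dec _ _) as [Hy|Hn]. discriminate.
    apply Hn. rewrite <- Hbound. auto. }
  specialize (HMB Hev).
  assert (Hexp : exp (- tau / A0) * exp (INR m * c2 / (A0 - rho / 2 * INR m)) <= 3 / INR n).
  { assert (E1 : - tau / A0 = - ln (INR n) - 2) by (unfold tau, A0; field; split; nra).
    assert (E2 : INR m * c2 / (A0 - rho / 2 * INR m) <= 2).
    { unfold A0. apply (Rmult_le_reg_r (gam * INR m - rho / 2 * INR m)). nra.
      replace (INR m * c2 / (gam * INR m - rho / 2 * INR m) * (gam * INR m - rho / 2 * INR m)) with (INR m * c2) by (field; nra).
      nra. }
    rewrite E1, <- exp_plus. apply Rle_trans with (exp (- ln (INR n))).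
    apply exp_le'. lra. rewrite exp_Ropp, exp_ln by lra.
    apply (Rmult_le_reg_r (INR n)). lra. unfold Rdiv. rewrite Rmult_assoc, !Rinv_l by lra. lra. }
  apply Rle_ge. fold ev. lra.
Qed.
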